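(* Let $(X_i,\mathbf{x}_m,X_f)$ be an instance of the three-point Dubins path problem, and consider the class of $C_1S_2C_3S_4C_5$ paths with a fixed turning direction ($L$ or $R$) for each curved segment. If there exists a $C_1S_2C_3S_4C_5$ path in this class in which $S_2$ and $S_4$ are parallel and intersecting (i.e., lie on a common line), then this path is the shortest path in the class.
   Context: A Dubins vehicle moves forward in the plane with unit speed and minimum turning radius $R_{\min}$: $\dot x=\cos\alpha$, $\dot y=\sin\alpha$, $\dot\alpha=u$, $|u|\le 1/R_{\min}$. A configuration is $X=(\mathbf{x},\alpha)$. The three-point Dubins path problem: given configurations $X_i$, $X_f$ and a midpoint $\mathbf{x}_m$ (pairwise distances among the three points at least $4R_{\min}$), find a heading at $\mathbf{x}_m$ minimizing the length of the Dubins path from $X_i$ through $\mathbf{x}_m$ to $X_f$. A path of type $C_1S_2C_3S_4C_5$ from $X_i$ via $\mathbf{x}_m$ to $X_f$ consists of minimum-radius arcs $C_1$ (starting at $X_i$), $C_3$ (passing through $\mathbf{x}_m$), $C_5$ (ending at $X_f$), each a left ($L$) or right ($R$) turn, connected by straight segments $S_2$ and $S_4$; the heading at $\mathbf{x}_m$ is free. *)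

(* Defs.v *)
From Stdlib Require Import Reals ZArith.
Open Scope R_scope.

Record config : Type := Config { cx : R; cy : R; ch : R }.

Inductive turn : Type := Lt | Rt.

Definition tsign (d : turn) : R := match d with Lt => 1 | Rt => -1 end.

(** Follow a minimum-radius arc (radius [rho]) of turning direction [d]
    through turning angle [th >= 0] starting from configuration [c]
    (closed-form solution of xdot = cos a, ydot = sin a, adot = +-1/rho). *)
Definition arc (rho : R) (d : turn) (th : R) (c : config) : config :=
  let s := tsign d in
  Config (cx c + s * rho * (sin (ch c + s * th) - sin (ch c)))
         (cy c - s * rho * (cos (ch c + s * th) - cos (ch c)))
         (ch c + s * th).

Definition straight (l : R) (c : config) : config :=
  Config (cx c + l * cos (ch c)) (cy c + l * sin (ch c)) (ch c).

Definition same_config (c c' : config) : Prop :=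
  cx c = cx c' /\ cy c = cy c' /\ exists k : Z, ch c = ch c' + 2 * PI * IZR k.

(** Parameters of a C1 S2 C3 S4 C5 path: angle of C1, length of S2,
    angle of C3 before the midpoint, angle of C3 after the midpoint,
    length of S4, angle of C5. *)
Record params : Type := Params {
  th1 : R; l2 : R; th3a : R; th3b : R; l4 : R; th5 : R }.

Definition cfg1 rho d1 (Xi : config) p := arc rho d1 (th1 p) Xi.
Definition cfg2 rho d1 Xi p := straight (l2 p) (cfg1 rho d1 Xi p).
Definition cfgm rho d1 d3 Xi p := arc rho d3 (th3a p) (cfg2 rho d1 Xi p).
Definition cfg3 rho d1 d3 Xi p := arc rho d3 (th3b p) (cfgm rho d1 d3 Xi p).
Definition cfg4 rho d1 d3 Xi p := straight (l4 p) (cfg3 rho d1 d3 Xi p).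
Definition cfg5 rho d1 d3 d5 Xi p := arc rho d5 (th5 p) (cfg4 rho d1 d3 Xi p).

Definition is_CSCSC (rho : R) (Xi : config) (xm : R * R) (Xf : config)
    (d1 d3 d5 : turn) (p : params) : Prop :=
  0 <= th1 p < 2 * PI /\
  0 <= l2 p /\
  0 <= th3a p /\ 0 <= th3b p /\ th3a p + th3b p < 2 * PI /\
  0 <= l4 p /\
  0 <= th5 p < 2 * PI /\
  cx (cfgm rho d1 d3 Xi p) = fst xm /\ cy (cfgm rho d1 d3 Xi p) = snd xm /\
  same_config (cfg5 rho d1 d3 d5 Xi p) Xf.

Definition path_length (rho : R) (p : params) : R :=
  rho * (th1 p + th3a p + th3b p + th5 p) + l2 p + l4 p.

(** S2 and S4 are parallel and lie on a common line: the line carrying S2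
    (through the end of C1, with heading of S2) and the line carrying S4
    (through the end of C3, with heading of S4) coincide. *)
Definition S2_S4_collinear (rho : R) (Xi : config) (d1 d3 : turn) (p : params) : Prop :=
  let a := cfg1 rho d1 Xi p in
  let b := cfg3 rho d1 d3 Xi p in
  sin (ch b - ch a) = 0 /\
  (cx b - cx a) * sin (ch a) - (cy b - cy a) * cos (ch a) = 0.

Definition dist2 (p q : R * R) : R :=
  sqrt ((fst p - fst q) ^ 2 + (snd p - snd q) ^ 2).

(* Main.v *)
Require Import Defs.
From Stdlib Require Import Reals ZArith.
From Stdlib Require Import Lra Lia Psatz.
Open Scope R_scope.

Lemma sin_per_Z (x : R) (k : Z) : sin (x + 2 * PI * IZR k) = sin x.
Proof.
  destruct (Z_le_gt_dec 0 k) as [Hk|Hk].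
  - rewrite <- (Z2Nat.id k Hk), <- INR_IZR_INZ.
    replace (x + 2 * PI * INR (Z.to_nat k)) with (x + 2 * INR (Z.to_nat k) * PI) by ring.
    apply sin_period.
  - assert (Hk' : (0 <= - k)%Z) by lia.
    pose proof (sin_period (x + 2 * PI * IZR k) (Z.to_nat (-k))) as E.
    rewrite INR_IZR_INZ, Z2Nat.id, opp_IZR in E by exact Hk'.
    rewrite <- E. f_equal. ring.
Qed.

Lemma cos_per_Z (x : R) (k : Z) : cos (x + 2 * PI * IZR k) = cos x.
Proof.
  rewrite !cos_sin.
  replace (PI / 2 + (x + 2 * PI * IZR k)) with ((PI/2 + x) + 2 * PI * IZR k) by ring.
  apply sin_per_Z.
Qed.
Lemma contra1 (rho m l H2 H s1: R): 0<rho -> 2*rho < m -> 0<=l -> 0 < H2 -> H2 <= H -> H < 2*PI ->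
 (s1=1\/s1=-1) ->
 -rho*sin H - (s1-1)*rho*sin H2 - l*cos H2 = -m ->
 rho*cos H + (s1-1)*rho*cos H2 - l*sin H2 = s1*rho -> False.
Proof.
  intros Hr Hm Hl H0 H1 H2p Hs E1 E2.
  pose proof (sin2_cos2 H2) as P2. pose proof (sin2_cos2 H) as P.
  unfold Rsqr in P, P2.
  pose proof (SIN_bound H) as [SH1 SH2].
  pose proof (COS_bound H) as [CH1 CH2].
  pose proof (SIN_bound H2) as [S21 S22].
  pose proof (COS_bound H2) as [C21 C22].
  destruct (Rle_or_lt (sin H2) 0) as [Hsn|Hsp].
  2:{
    destruct Hs as [Hs|Hs]; subst s1.
    - (* cos H = 1 + l sin H2 / rho >= 1 *)
      assert (E2' : rho*cos H = rho + l*sin H2) by lra.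
      assert (0 <= l*sin H2) by (apply Rmult_le_pos; lra).
      assert (rho*cos H <= rho*1) by (apply Rmult_le_compat_l; lra).
      assert (Hl0 : l*sin H2 = 0) by lra.
      assert (cos H = 1) by (apply (Rmult_eq_reg_l rho); lra).
      assert (sin H = 0) by nra.
      assert (l = 0).
      { destruct (Rmult_integral _ _ Hl0); lra. }
      subst l. nra.
    - (* s1 = -1 : m sin H2 = rho (cos(H-H2) + cos H2 - 2) <= 0 *)
      assert (Hms : m * sin H2 = rho * (sin H * sin H2 + cos H * cos H2 + cos H2 - 2)) by nra.
      assert (sin H * sin H2 + cos H * cos H2 <= 1) by (pose proof (pow2_ge_0 (sin H - sin H2)); pose proof (pow2_ge_0 (cos H - cos H2)); nra).
      nra. }
  assert (HPI : PI <= H2).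
  { destruct (Rlt_or_le H2 PI) as [h|h]; [|exact h].
    pose proof (sin_gt_0 H2 H0 h). lra. }
  pose proof PI_RGT_0.
  assert (SHn : sin H <= 0) by (apply sin_le_0; lra).
  assert (Ccmp : cos H2 <= cos H) by (apply cos_incr_1; lra).
  assert (Clt1 : cos H2 < 1).
  { rewrite <- cos_2PI. apply cos_increasing_1; lra. }
  destruct Hs as [Hs|Hs]; subst s1.
  - destruct (Rle_or_lt (cos H2) 0) as [Hc|Hc].
    + nra.
    + assert (Hsneg : sin H2 < 0) by (destruct (Req_dec (sin H2) 0); nra).
      assert (K: (1 - cos H2) * cos H2 <= - sin H2).
      { assert (0 <= (1 - cos H2) * cos H2) by nra.
        assert (((1 - cos H2) * cos H2)^2 <= (- sin H2)^2) by nra.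
        nra. }
      assert (El : l * (- sin H2) = rho * (1 - cos H)) by lra.
      assert (l * cos H2 * (- sin H2) = cos H2 * (rho * (1 - cos H))) by (rewrite <- El; ring).
      assert (cos H2 * (rho * (1 - cos H)) <= cos H2 * (rho * (1 - cos H2))).
      { apply Rmult_le_compat_l; [lra|]. apply Rmult_le_compat_l; lra. }
      assert (cos H2 * (rho * (1 - cos H2)) <= rho * (- sin H2)) by nra.
      assert (l * cos H2 <= rho).
      { apply (Rmult_le_reg_r (- sin H2)); lra. }
      nra.
  - assert (l * cos H2 <= 0).
    { destruct (Rle_or_lt (cos H2) 0) as [Hc|Hc]; [nra|].
      assert (Hsneg : sin H2 < 0) by (destruct (Req_dec (sin H2) 0); nra).
      assert (El : l * (- sin H2) = rho * (2 * cos H2 - 1 - cos H)) by lra.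
      assert (l * cos H2 * (- sin H2) = cos H2 * (rho * (2 * cos H2 - 1 - cos H))) by (rewrite <- El; ring).
      assert (cos H2 * (rho * (2 * cos H2 - 1 - cos H)) <= cos H2 * (rho * (cos H2 - 1))).
      { apply Rmult_le_compat_l; [lra|]. apply Rmult_le_compat_l; lra. }
      assert (cos H2 * (rho * (cos H2 - 1)) <= 0).
      { assert (0 <= cos H2 * (rho * (1 - cos H2))) by (apply Rmult_le_pos; [lra|apply Rmult_le_pos; lra]). lra. }
      assert (l * cos H2 * (- sin H2) <= 0 * (- sin H2)) by lra.
      apply (Rmult_le_reg_r (- sin H2)); lra. }
    nra.
Qed.

Lemma cos1_Z (x : R) : cos x = 1 -> exists j : Z, x = 2 * PI * IZR j.
Proof.
  intro Hc.
  replace x with (2 * (x/2)) in Hc by field.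
  rewrite cos_2a_sin in Hc.
  assert (sin (x/2) = 0) by nra.
  destruct (sin_eq_0_0 _ H) as [j Hj]. exists j. lra.
Qed.

Lemma half1 (rho m l a H2 s1 : R) : 0 < rho -> 2*rho < m -> 0 <= l -> 0 <= a ->
  (s1 = 1 \/ s1 = -1) ->
  -rho*sin (H2 + a) - (s1-1)*rho*sin H2 - l*cos H2 = -m ->
  rho*cos (H2 + a) + (s1-1)*rho*cos H2 - l*sin H2 = s1*rho ->
  exists k : Z, 0 <= 2*PI*IZR k - H2 <= a.
Proof.
  intros Hr Hm Hl Ha Hs E1 E2.
  pose proof PI_RGT_0 as HPI.
  destruct (archimed (H2 / (2*PI))) as [U1 U2].
  set (k1 := up (H2 / (2*PI))) in *.
  assert (A1 : H2 < 2*PI*IZR k1).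
  { assert (H2 = 2*PI * (H2/(2*PI))) by (field; lra).
    assert (2*PI*(H2/(2*PI)) < 2*PI*IZR k1) by (apply Rmult_lt_compat_l; lra). lra. }
  assert (A2 : 2*PI*IZR k1 - H2 <= 2*PI).
  { assert (H2 = 2*PI * (H2/(2*PI))) by (field; lra).
    assert (2*PI*(IZR k1 - H2/(2*PI)) <= 2*PI*1) by (apply Rmult_le_compat_l; lra). lra. }
  destruct (Rle_or_lt (2*PI*IZR k1 - H2) a) as [B|B].
  { exists k1. lra. }
  destruct (Req_dec (2*PI*IZR k1 - H2) (2*PI)) as [C|C].
  { exists (k1 - 1)%Z. rewrite minus_IZR. lra. }
  exfalso.
  set (j := (1 - k1)%Z).
  set (H2' := H2 + 2*PI*IZR j).
  assert (HJ : 2*PI*IZR j = 2*PI - 2*PI*IZR k1) by (unfold j; rewrite minus_IZR; ring).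
  apply (contra1 rho m l H2' (H2' + a) s1); try assumption; try (unfold H2'; lra).
  - replace (H2' + a) with ((H2 + a) + 2*PI*IZR j) by (unfold H2'; ring).
    unfold H2'. rewrite !sin_per_Z, cos_per_Z. exact E1.
  - replace (H2' + a) with ((H2 + a) + 2*PI*IZR j) by (unfold H2'; ring).
    unfold H2'. rewrite !cos_per_Z, sin_per_Z. exact E2.
Qed.

Lemma half1_eq (rho m l a H2 s1 : R) : 0 < rho -> 2*rho < m -> 0 <= l -> 0 <= a ->
  (s1 = 1 \/ s1 = -1) ->
  -rho*sin (H2 + a) - (s1-1)*rho*sin H2 - l*cos H2 = -m ->
  rho*cos (H2 + a) + (s1-1)*rho*cos H2 - l*sin H2 = s1*rho ->
  (exists k : Z, H2 + a = 2*PI*IZR k) ->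
  (exists j : Z, H2 = 2*PI*IZR j) /\ l = m.
Proof.
  intros Hr Hm Hl Ha Hs E1 E2 [k Hk].
  assert (Sz : sin (H2 + a) = 0).
  { rewrite Hk. replace (2*PI*IZR k) with (0 + 2*PI*IZR k) by ring. rewrite sin_per_Z. apply sin_0. }
  assert (Co : cos (H2 + a) = 1).
  { rewrite Hk. replace (2*PI*IZR k) with (0 + 2*PI*IZR k) by ring. rewrite cos_per_Z. apply cos_0. }
  rewrite Sz in E1. rewrite Co in E2.
  pose proof (sin2_cos2 H2) as P2. unfold Rsqr in P2.
  assert (Hcs : sin H2 = 0 /\ cos H2 = 1).
  { destruct Hs as [Hs|Hs]; subst s1.
    - assert (Elc : l * cos H2 = m) by lra.
      assert (Els : l * sin H2 = 0) by lra.
      assert (l <> 0) by (intro; subst; lra).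
      assert (sin H2 = 0) by (destruct (Rmult_integral _ _ Els); [contradiction|assumption]).
      split; [assumption|].
      assert (cos H2 * cos H2 = 1) by nra.
      assert (0 < cos H2) by nra.
      nra.
    - assert (Elc : l * cos H2 = m + 2*rho*sin H2) by lra.
      assert (Els : l * sin H2 = 2*rho*(1 - cos H2)) by lra.
      assert (Hms : m * sin H2 = 2*rho*(cos H2 - 1)).
      { assert (l * cos H2 * sin H2 = (m + 2*rho*sin H2) * sin H2) by (rewrite Elc; ring).
        assert (l * sin H2 * cos H2 = 2*rho*(1 - cos H2) * cos H2) by (rewrite Els; ring).
        nra. }
      pose proof (COS_bound H2) as [C1 C2].
      assert (sin H2 <= 0) by nra.
      assert (0 <= sin H2) by nra.
      assert (sin H2 = 0) by lra.
      split; [assumption|]. nra. }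
  destruct Hcs as [Hs0 Hc1].
  split; [apply cos1_Z; exact Hc1|].
  destruct Hs as [Hs|Hs]; subst s1; rewrite Hs0, Hc1 in *; lra.
Qed.

Lemma half_gen (rho m l a H2 s1 s3 : R) : 0 < rho -> 2*rho < m -> 0 <= l -> 0 <= a ->
  (s1 = 1 \/ s1 = -1) -> (s3 = 1 \/ s3 = -1) ->
  -s3*rho*sin (H2 + s3*a) - (s1-s3)*rho*sin H2 - l*cos H2 = -m ->
  s3*rho*cos (H2 + s3*a) + (s1-s3)*rho*cos H2 - l*sin H2 = s1*rho ->
  exists k : Z, 0 <= s3*(2*PI*IZR k - H2) <= a.
Proof.
  intros Hr Hm Hl Ha Hs1 Hs3 E1 E2.
  destruct Hs3 as [Hs3|Hs3]; subst s3.
  - destruct (half1 rho m l a H2 s1) as [k Hk]; try assumption.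
    + replace (H2 + a) with (H2 + 1*a) by ring. lra.
    + replace (H2 + a) with (H2 + 1*a) by ring. lra.
    + exists k. lra.
  - destruct (half1 rho m l a (-H2) (-s1)) as [k Hk]; try assumption.
    + destruct Hs1; [right|left]; lra.
    + replace (-H2 + a) with (-(H2 + -1*a)) by ring.
      rewrite sin_neg, cos_neg, sin_neg. lra.
    + replace (-H2 + a) with (-(H2 + -1*a)) by ring.
      rewrite cos_neg, cos_neg, sin_neg. lra.
    + exists (- k)%Z. rewrite opp_IZR. lra.
Qed.

Lemma half_gen_eq (rho m l a H2 s1 s3 : R) : 0 < rho -> 2*rho < m -> 0 <= l -> 0 <= a ->
  (s1 = 1 \/ s1 = -1) -> (s3 = 1 \/ s3 = -1) ->
  -s3*rho*sin (H2 + s3*a) - (s1-s3)*rho*sin H2 - l*cos H2 = -m ->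
  s3*rho*cos (H2 + s3*a) + (s1-s3)*rho*cos H2 - l*sin H2 = s1*rho ->
  (exists k : Z, H2 + s3*a = 2*PI*IZR k) ->
  (exists j : Z, H2 = 2*PI*IZR j) /\ l = m.
Proof.
  intros Hr Hm Hl Ha Hs1 Hs3 E1 E2 [k Hk].
  destruct Hs3 as [Hs3|Hs3]; subst s3.
  - apply (half1_eq rho m l a H2 s1); try assumption.
    + replace (H2 + a) with (H2 + 1*a) by ring. lra.
    + replace (H2 + a) with (H2 + 1*a) by ring. lra.
    + exists k. lra.
  - destruct (half1_eq rho m l a (-H2) (-s1)) as [[j Hj] Hlm]; try assumption.
    + destruct Hs1; [right|left]; lra.
    + replace (-H2 + a) with (-(H2 + -1*a)) by ring.
      rewrite sin_neg, cos_neg, sin_neg. lra.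
    + replace (-H2 + a) with (-(H2 + -1*a)) by ring.
      rewrite cos_neg, cos_neg, sin_neg. lra.
    + exists (- k)%Z. rewrite opp_IZR. lra.
    + split; [|exact Hlm]. exists (- j)%Z. rewrite opp_IZR. lra.
Qed.

Lemma small_int (k : Z) : -1 < IZR k < 1 -> k = 0%Z.
Proof.
  intros [H1 H2].
  apply lt_IZR in H1. apply lt_IZR in H2. lia.
Qed.

Lemma eq_mod (x y s : R) (k : Z) : 0 <= x < 2*PI -> 0 <= y < 2*PI -> (s = 1 \/ s = -1) ->
  s * (x - y) = 2*PI*IZR k -> x = y.
Proof.
  intros Hx Hy Hs E. pose proof PI_RGT_0.
  assert (k = 0%Z).
  { apply small_int. split.
    - apply (Rmult_lt_reg_l (2*PI)); [lra|]. destruct Hs; subst; lra.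
    - apply (Rmult_lt_reg_l (2*PI)); [lra|]. destruct Hs; subst; lra. }
  subst k. simpl in E. destruct Hs; subst; lra.
Qed.

Lemma combine (rho L2 L4 l2 l4 a b H2 H4 s1 s3 s5 : R) :
  0 < rho -> 2*rho < L2 -> 2*rho < L4 -> 0 <= l2 -> 0 <= l4 -> 0 <= a -> 0 <= b -> a + b < 2*PI ->
  (s1 = 1 \/ s1 = -1) -> (s3 = 1 \/ s3 = -1) -> (s5 = 1 \/ s5 = -1) ->
  H4 = H2 + s3*a + s3*b ->
  -s3*rho*sin (H2 + s3*a) - (s1-s3)*rho*sin H2 - l2*cos H2 = -L2 ->
  s3*rho*cos (H2 + s3*a) + (s1-s3)*rho*cos H2 - l2*sin H2 = s1*rho ->
  -s3*rho*sin (-H4 + s3*b) - (s5-s3)*rho*sin (-H4) - l4*cos (-H4) = -L4 ->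
  s3*rho*cos (-H4 + s3*b) + (s5-s3)*rho*cos (-H4) - l4*sin (-H4) = s5*rho ->
  a = 0 /\ b = 0 /\ l2 = L2 /\ l4 = L4 /\ (exists j, H2 = 2*PI*IZR j) /\ (exists j, H4 = 2*PI*IZR j).
Proof.
  intros Hr HL2 HL4 Hl2 Hl4 Ha Hb Hab Hs1 Hs3 Hs5 EH4 E1 E2 F1 F2.
  pose proof PI_RGT_0 as HPI.
  assert (S3sq : s3 * s3 = 1) by (destruct Hs3; subst; ring).
  destruct (half_gen rho L2 l2 a H2 s1 s3) as [k1 Hk1]; try assumption; try lra.
  destruct (half_gen rho L4 l4 b (-H4) s5 s3) as [k2 Hk2]; try assumption; try lra.
  assert (Hsum : s3 * (2*PI*IZR (k1 + k2)) = s3*(2*PI*IZR k1 - H2) + s3*(2*PI*IZR k2 - - H4) - a - b).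
  { rewrite plus_IZR, EH4.
    replace (s3 * (2 * PI * IZR k1 - H2) + s3 * (2 * PI * IZR k2 - - (H2 + s3 * a + s3 * b)) - a - b)
      with (s3 * (2*PI*(IZR k1 + IZR k2)) + (s3*s3 - 1)*a + (s3*s3-1)*b) by ring.
    rewrite S3sq. ring. }
  assert (Hk : (k1 + k2)%Z = 0%Z).
  { apply small_int. split.
    - apply (Rmult_lt_reg_l (2*PI)); [lra|]. destruct Hs3; subst; lra.
    - apply (Rmult_lt_reg_l (2*PI)); [lra|]. destruct Hs3; subst; lra. }
  rewrite Hk in Hsum. simpl in Hsum.
  assert (X : s3*(2*PI*IZR k1 - H2) = a) by lra.
  assert (Y : s3*(2*PI*IZR k2 - - H4) = b) by lra.
  assert (X' : H2 + s3*a = 2*PI*IZR k1).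
  { rewrite <- X. replace (H2 + s3 * (s3 * (2 * PI * IZR k1 - H2))) with (H2 + (s3*s3) * (2 * PI * IZR k1 - H2)) by ring.
    rewrite S3sq. ring. }
  assert (Y' : -H4 + s3*b = 2*PI*IZR k2).
  { rewrite <- Y. replace (-H4 + s3 * (s3 * (2 * PI * IZR k2 - - H4))) with (-H4 + (s3*s3) * (2 * PI * IZR k2 - - H4)) by ring.
    rewrite S3sq. ring. }
  destruct (half_gen_eq rho L2 l2 a H2 s1 s3) as [[j1 Hj1] El2]; try assumption; try lra.
  { exists k1; exact X'. }
  destruct (half_gen_eq rho L4 l4 b (-H4) s5 s3) as [[j2 Hj2] El4]; try assumption; try lra.
  { exists k2; exact Y'. }
  assert (Ha0 : a = 0).
  { apply (eq_mod a 0 s3 (k1 - j1)); try lra; try assumption.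
    rewrite minus_IZR. lra. }
  assert (Hb0 : b = 0).
  { apply (eq_mod b 0 s3 (k2 - j2)); try lra; try assumption.
    rewrite minus_IZR. lra. }
  repeat split; try assumption.
  - exists j1; exact Hj1.
  - exists (- j2)%Z. rewrite opp_IZR. lra.
Qed.

Lemma frame1 (rho s1 s3 psi H2 H l m : R) :
  s1*rho*sin (psi+H2) + l*cos (psi+H2) + s3*rho*(sin (psi+H) - sin (psi+H2)) - s1*rho*sin psi - m*cos psi = 0 ->
  -s1*rho*cos (psi+H2) + l*sin (psi+H2) - s3*rho*(cos (psi+H) - cos (psi+H2)) + s1*rho*cos psi - m*sin psi = 0 ->
  -s3*rho*sin H - (s1-s3)*rho*sin H2 - l*cos H2 = -m /\
  s3*rho*cos H + (s1-s3)*rho*cos H2 - l*sin H2 = s1*rho.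
Proof.
  rewrite !sin_plus, !cos_plus. intros Vx Vy.
  pose proof (sin2_cos2 psi) as P. unfold Rsqr in P.
  set (c := cos psi) in *. set (s := sin psi) in *.
  split.
  - assert (E : (s*s + c*c) * (-s3*rho*sin H - (s1-s3)*rho*sin H2 - l*cos H2 + m) =
       - (c * (s1 * rho * (s * cos H2 + c * sin H2) + l * (c * cos H2 - s * sin H2) +
       s3 * rho * (s * cos H + c * sin H - (s * cos H2 + c * sin H2)) - s1 * rho * s - m * c)
       + s * (- s1 * rho * (c * cos H2 - s * sin H2) + l * (s * cos H2 + c * sin H2) -
       s3 * rho * (c * cos H - s * sin H - (c * cos H2 - s * sin H2)) + s1 * rho * c - m * s))) by ring.
    rewrite P, Vx, Vy in E. lra.
  - assert (E : (s*s + c*c) * (s3*rho*cos H + (s1-s3)*rho*cos H2 - l*sin H2 - s1*rho) =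
       - (- s * (s1 * rho * (s * cos H2 + c * sin H2) + l * (c * cos H2 - s * sin H2) +
       s3 * rho * (s * cos H + c * sin H - (s * cos H2 + c * sin H2)) - s1 * rho * s - m * c)
       + c * (- s1 * rho * (c * cos H2 - s * sin H2) + l * (s * cos H2 + c * sin H2) -
       s3 * rho * (c * cos H - s * sin H - (c * cos H2 - s * sin H2)) + s1 * rho * c - m * s))) by ring.
    rewrite P, Vx, Vy in E. lra.
Qed.

Lemma frame2 (rho s3 s5 psi H H4 l m : R) :
  s3*rho*(sin (psi+H4) - sin (psi+H)) + l*cos (psi+H4) - s5*rho*sin (psi+H4) - m*cos psi + s5*rho*sin psi = 0 ->
  -s3*rho*(cos (psi+H4) - cos (psi+H)) + l*sin (psi+H4) + s5*rho*cos (psi+H4) - m*sin psi - s5*rho*cos psi = 0 ->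
  -s3*rho*sin (-H) - (s5-s3)*rho*sin (-H4) - l*cos (-H4) = -m /\
  s3*rho*cos (-H) + (s5-s3)*rho*cos (-H4) - l*sin (-H4) = s5*rho.
Proof.
  repeat rewrite sin_neg; repeat rewrite cos_neg.
  rewrite !sin_plus, !cos_plus. intros Vx Vy.
  pose proof (sin2_cos2 psi) as P. unfold Rsqr in P.
  set (c := cos psi) in *. set (s := sin psi) in *.
  set (VX := s3 * rho * (s * cos H4 + c * sin H4 - (s * cos H + c * sin H)) + l * (c * cos H4 - s * sin H4) -
      s5 * rho * (s * cos H4 + c * sin H4) - m * c + s5 * rho * s) in *.
  set (VY := - s3 * rho * (c * cos H4 - s * sin H4 - (c * cos H - s * sin H)) + l * (s * cos H4 + c * sin H4) +
      s5 * rho * (c * cos H4 - s * sin H4) - m * s - s5 * rho * c) in *.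
  split.
  - assert (E : (s*s + c*c) * (- s3 * rho * - sin H - (s5 - s3) * rho * - sin H4 - l * cos H4 + m) = -(c*VX + s*VY))
      by (unfold VX, VY; ring).
    rewrite P, Vx, Vy in E. lra.
  - assert (E : (s*s + c*c) * (s3 * rho * cos H + (s5 - s3) * rho * cos H4 - l * - sin H4 - s5*rho) = (-s*VX + c*VY))
      by (unfold VX, VY; ring).
    rewrite P, Vx, Vy in E. lra.
Qed.

Lemma far (rho m ax ay bx by' : R) : 0 < rho -> 0 <= m ->
  ax*ax + ay*ay = rho*rho + m*m -> bx*bx + by'*by' = rho*rho ->
  4*rho <= sqrt ((ax+bx)^2 + (ay+by')^2) -> 2*rho < m.
Proof.
  intros Hr Hm A B D.
  assert (D2 : (4*rho)^2 <= (ax+bx)^2 + (ay+by')^2).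
  { rewrite <- (pow2_sqrt ((ax+bx)^2 + (ay+by')^2)) by (apply Rplus_le_le_0_compat; apply pow2_ge_0).
    apply pow_incr. lra. }
  assert (0 <= (ax-bx)^2 + (ay-by')^2) by (apply Rplus_le_le_0_compat; apply pow2_ge_0).
  assert (Id : (ax+bx)^2 + (ay+by')^2 + ((ax-bx)^2 + (ay-by')^2) = 2*(ax*ax+ay*ay) + 2*(bx*bx+by'*by')) by ring.
  rewrite A, B in Id.
  assert (6*(rho*rho) <= m*m) by nra.
  destruct (Rle_or_lt m (2*rho)) as [h|h]; [|exact h].
  assert (m*m <= (2*rho)*(2*rho)) by (apply Rmult_le_compat; lra).
  nra.
Qed.

Lemma tsign_pm (d : turn) : tsign d = 1 \/ tsign d = -1.
Proof. destruct d; simpl; auto. Qed.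

Lemma cfgm_x rho d1 d3 Xi p : cx (cfgm rho d1 d3 Xi p) = cx Xi + tsign d1*rho*(sin (ch Xi + tsign d1*th1 p) - sin (ch Xi)) + l2 p * cos (ch Xi + tsign d1 * th1 p) + tsign d3*rho*(sin (ch Xi + tsign d1*th1 p + tsign d3*th3a p) - sin (ch Xi + tsign d1*th1 p)).
Proof. reflexivity. Qed.
Lemma cfgm_y rho d1 d3 Xi p : cy (cfgm rho d1 d3 Xi p) = cy Xi - tsign d1*rho*(cos (ch Xi + tsign d1*th1 p) - cos (ch Xi)) + l2 p * sin (ch Xi + tsign d1 * th1 p) - tsign d3*rho*(cos (ch Xi + tsign d1*th1 p + tsign d3*th3a p) - cos (ch Xi + tsign d1*th1 p)).
Proof. reflexivity. Qed.
Lemma cfgm_h rho d1 d3 Xi p : ch (cfgm rho d1 d3 Xi p) = ch Xi + tsign d1*th1 p + tsign d3*th3a p.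
Proof. reflexivity. Qed.
Lemma cfg5_x rho d1 d3 d5 Xi p : 
  cx (cfg5 rho d1 d3 d5 Xi p) = cx (cfgm rho d1 d3 Xi p) + tsign d3*rho*(sin (ch (cfgm rho d1 d3 Xi p) + tsign d3*th3b p) - sin (ch (cfgm rho d1 d3 Xi p)))
   + l4 p * cos (ch (cfgm rho d1 d3 Xi p) + tsign d3*th3b p) + tsign d5*rho*(sin (ch (cfgm rho d1 d3 Xi p) + tsign d3*th3b p + tsign d5*th5 p) - sin (ch (cfgm rho d1 d3 Xi p) + tsign d3*th3b p)).
Proof. reflexivity. Qed.
Lemma cfg5_y rho d1 d3 d5 Xi p : 
  cy (cfg5 rho d1 d3 d5 Xi p) = cy (cfgm rho d1 d3 Xi p) - tsign d3*rho*(cos (ch (cfgm rho d1 d3 Xi p) + tsign d3*th3b p) - cos (ch (cfgm rho d1 d3 Xi p)))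
   + l4 p * sin (ch (cfgm rho d1 d3 Xi p) + tsign d3*th3b p) - tsign d5*rho*(cos (ch (cfgm rho d1 d3 Xi p) + tsign d3*th3b p + tsign d5*th5 p) - cos (ch (cfgm rho d1 d3 Xi p) + tsign d3*th3b p)).
Proof. reflexivity. Qed.
Lemma cfg5_h rho d1 d3 d5 Xi p : ch (cfg5 rho d1 d3 d5 Xi p) = ch (cfgm rho d1 d3 Xi p) + tsign d3*th3b p + tsign d5*th5 p.
Proof. reflexivity. Qed.
Lemma col_h rho d1 d3 Xi p : ch (cfg3 rho d1 d3 Xi p) - ch (cfg1 rho d1 Xi p) = tsign d3 * (th3a p + th3b p).
Proof. unfold cfg3, cfgm, cfg2, cfg1, arc, straight; cbn. ring. Qed.
Lemma col_x rho d1 d3 Xi p : cx (cfg3 rho d1 d3 Xi p) - cx (cfg1 rho d1 Xi p) =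
  l2 p * cos (ch (cfg1 rho d1 Xi p)) + tsign d3*rho*(sin (ch (cfg1 rho d1 Xi p) + tsign d3*(th3a p + th3b p)) - sin (ch (cfg1 rho d1 Xi p))).
Proof. unfold cfg3, cfgm, cfg2, cfg1, arc, straight; cbn. replace (ch Xi + tsign d1 * th1 p + tsign d3 * (th3a p + th3b p)) with (ch Xi + tsign d1 * th1 p + tsign d3 * th3a p + tsign d3 * th3b p) by ring. ring. Qed.
Lemma col_y rho d1 d3 Xi p : cy (cfg3 rho d1 d3 Xi p) - cy (cfg1 rho d1 Xi p) =
  l2 p * sin (ch (cfg1 rho d1 Xi p)) - tsign d3*rho*(cos (ch (cfg1 rho d1 Xi p) + tsign d3*(th3a p + th3b p)) - cos (ch (cfg1 rho d1 Xi p))).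
Proof. unfold cfg3, cfgm, cfg2, cfg1, arc, straight; cbn. replace (ch Xi + tsign d1 * th1 p + tsign d3 * (th3a p + th3b p)) with (ch Xi + tsign d1 * th1 p + tsign d3 * th3a p + tsign d3 * th3b p) by ring. ring. Qed.

Lemma col_zero rho d1 d3 Xi p : 0 < rho -> 0 <= th3a p -> 0 <= th3b p -> th3a p + th3b p < 2*PI ->
  S2_S4_collinear rho Xi d1 d3 p -> th3a p = 0 /\ th3b p = 0.
Proof.
  intros Hr Ha Hb Hab. unfold S2_S4_collinear; cbv zeta. intros [C1 C2].
  rewrite col_h in C1.
  rewrite col_x, col_y in C2.
  set (psi := ch (cfg1 rho d1 Xi p)) in *.
  set (T := th3a p + th3b p) in *.
  pose proof (tsign_pm d3) as S3.
  set (s3 := tsign d3) in *.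
  assert (ST : sin T = 0).
  { destruct S3 as [E|E]; rewrite E in C1.
    - rewrite Rmult_1_l in C1. exact C1.
    - replace (-1 * T) with (- T) in C1 by ring. rewrite sin_neg in C1. lra. }
  destruct (sin_eq_0_0 T ST) as [k Hk].
  pose proof PI_RGT_0 as HPI. assert (T0 : 0 <= T) by (unfold T; lra).
  assert (Hk0 : (0 <= k)%Z).
  { apply le_IZR. apply (Rmult_le_reg_r PI); [lra|]. simpl. lra. }
  assert (Hk1 : (k < 2)%Z).
  { apply lt_IZR. apply (Rmult_lt_reg_r PI); [lra|]. rewrite <- Hk. replace (IZR 2) with 2 by reflexivity. lra. }
  assert (k = 0%Z \/ k = 1%Z) as [K|K] by lia; subst k.
  - simpl in Hk. unfold T in Hk. split; lra.
  - exfalso. simpl in Hk. rewrite Hk in C2.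
    assert (SP : sin (psi + s3 * PI) = - sin psi /\ cos (psi + s3 * PI) = - cos psi).
    { destruct S3 as [E|E]; rewrite E.
      - rewrite Rmult_1_l. rewrite sin_plus, cos_plus, sin_PI, cos_PI. split; ring.
      - replace (-1 * PI) with (- PI) by ring. rewrite sin_plus, cos_plus, sin_neg, cos_neg, sin_PI, cos_PI. split; ring. }
    destruct SP as [SP CP]. rewrite Rmult_1_l in C2. rewrite SP, CP in C2.
    pose proof (sin2_cos2 psi) as P. unfold Rsqr in P.
    assert (E : (l2 p * cos psi + s3 * rho * (- sin psi - sin psi)) * sin psi -
      (l2 p * sin psi - s3 * rho * (- cos psi - cos psi)) * cos psi = -2 * s3 * rho * (sin psi * sin psi + cos psi * cos psi)) by ring.
    rewrite P, C2 in E. destruct S3 as [E3|E3]; rewrite E3 in E; lra.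
Qed.
Theorem lemma3 (rho : R) (Xi Xf : config) (xm : R * R) (d1 d3 d5 : turn)
    (p : params) :
  0 < rho ->
  4 * rho <= dist2 (cx Xi, cy Xi) xm ->
  4 * rho <= dist2 xm (cx Xf, cy Xf) ->
  4 * rho <= dist2 (cx Xi, cy Xi) (cx Xf, cy Xf) ->
  is_CSCSC rho Xi xm Xf d1 d3 d5 p ->
  S2_S4_collinear rho Xi d1 d3 p ->
  forall q : params, is_CSCSC rho Xi xm Xf d1 d3 d5 q ->
    path_length rho p <= path_length rho q.
Proof.
  intros Hr D1 D2 _ Hp Hcol q Hq.
  destruct Hp as (Pt1 & Pl2 & Pa & Pb & Pab & Pl4 & Pt5 & Pmx & Pmy & Pf).
  destruct (col_zero rho d1 d3 Xi p Hr Pa Pb Pab Hcol) as [Pa0 Pb0].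
  destruct Hq as (Qt1 & Ql2 & Qa & Qb & Qab & Ql4 & Qt5 & Qmx & Qmy & Qf).
  destruct Pf as (Pfx & Pfy & kp & Pfh). destruct Qf as (Qfx & Qfy & kq & Qfh).
  rewrite cfg5_x in Pfx, Qfx. rewrite cfg5_y in Pfy, Qfy. rewrite cfg5_h in Pfh, Qfh.
  rewrite Pmx in Pfx. rewrite Pmy in Pfy. rewrite Qmx in Qfx. rewrite Qmy in Qfy.
  rewrite cfgm_h in Pfx, Pfy, Pfh, Qfx, Qfy, Qfh.
  rewrite cfgm_x in Pmx, Qmx. rewrite cfgm_y in Pmy, Qmy.
  unfold dist2 in D1, D2. simpl fst in D1, D2. simpl snd in D1, D2.
  rewrite <- Pmx, <- Pmy in D1.
  rewrite Pa0, Pb0 in *.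
  rewrite !Rmult_0_r, !Rplus_0_r in *.
  pose proof (tsign_pm d1) as S1. pose proof (tsign_pm d3) as S3. pose proof (tsign_pm d5) as S5.
  set (s1 := tsign d1) in *. set (s3 := tsign d3) in *. set (s5 := tsign d5) in *.
  set (hi := ch Xi) in *.
  set (psi := hi + s1 * th1 p) in *.
  set (h2 := hi + s1 * th1 q) in *.
  rewrite Pfh in Pfx, Pfy. rewrite Qfh in Qfx, Qfy.
  rewrite sin_per_Z in Pfx, Qfx. rewrite cos_per_Z in Pfy, Qfy.
  pose proof (sin2_cos2 psi) as Ppsi. unfold Rsqr in Ppsi.
  pose proof (sin2_cos2 hi) as Phi. unfold Rsqr in Phi.
  assert (S1sq : s1 * s1 = 1) by (destruct S1 as [E|E]; rewrite E; ring).
  assert (S5sq : s5 * s5 = 1) by (destruct S5 as [E|E]; rewrite E; ring).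
  assert (HL2 : 2 * rho < l2 p).
  { apply (far rho (l2 p) (-s1*rho*sin psi - l2 p*cos psi) (s1*rho*cos psi - l2 p*sin psi)
             (s1*rho*sin hi) (-s1*rho*cos hi)); try assumption.
    - replace ((- s1 * rho * sin psi - l2 p * cos psi) * (- s1 * rho * sin psi - l2 p * cos psi) +
        (s1 * rho * cos psi - l2 p * sin psi) * (s1 * rho * cos psi - l2 p * sin psi))
        with ((s1*s1)*(rho*rho)*(sin psi * sin psi + cos psi * cos psi) + l2 p * l2 p * (sin psi * sin psi + cos psi * cos psi)) by ring.
      rewrite S1sq, Ppsi. ring.
    - replace (s1 * rho * sin hi * (s1 * rho * sin hi) + - s1 * rho * cos hi * (- s1 * rho * cos hi))
        with ((s1*s1)*(rho*rho)*(sin hi * sin hi + cos hi * cos hi)) by ring.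
      rewrite S1sq, Phi. ring.
    - match type of D1 with _ <= sqrt ?z => replace ((- s1 * rho * sin psi - l2 p * cos psi + s1 * rho * sin hi) ^ 2 +
         (s1 * rho * cos psi - l2 p * sin psi + - s1 * rho * cos hi) ^ 2) with z by ring end.
      exact D1. }
  rewrite <- Pfx, <- Pfy in D2.
  assert (HL4 : 2 * rho < l4 p).
  { apply (far rho (l4 p) (-l4 p*cos psi + s5*rho*sin psi) (-l4 p*sin psi - s5*rho*cos psi)
             (-s5*rho*sin (ch Xf)) (s5*rho*cos (ch Xf))); try assumption.
    - replace ((- l4 p * cos psi + s5 * rho * sin psi) * (- l4 p * cos psi + s5 * rho * sin psi) +
        (- l4 p * sin psi - s5 * rho * cos psi) * (- l4 p * sin psi - s5 * rho * cos psi))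
        with ((s5*s5)*(rho*rho)*(sin psi * sin psi + cos psi * cos psi) + l4 p * l4 p * (sin psi * sin psi + cos psi * cos psi)) by ring.
      rewrite S5sq, Ppsi. ring.
    - pose proof (sin2_cos2 (ch Xf)) as Pf. unfold Rsqr in Pf.
      replace (- s5 * rho * sin (ch Xf) * (- s5 * rho * sin (ch Xf)) + s5 * rho * cos (ch Xf) * (s5 * rho * cos (ch Xf)))
        with ((s5*s5)*(rho*rho)*(sin (ch Xf) * sin (ch Xf) + cos (ch Xf) * cos (ch Xf))) by ring.
      rewrite S5sq, Pf. ring.
    - match type of D2 with _ <= sqrt ?z => replace ((- l4 p * cos psi + s5 * rho * sin psi + - s5 * rho * sin (ch Xf)) ^ 2 +
         (- l4 p * sin psi - s5 * rho * cos psi + s5 * rho * cos (ch Xf)) ^ 2) with z by ring end.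
      exact D2. }
  set (a := th3a q) in *. set (b := th3b q) in *.
  set (H2 := h2 - psi).
  set (H4 := H2 + s3 * a + s3 * b).
  assert (F1 : -s3*rho*sin (H2 + s3*a) - (s1-s3)*rho*sin H2 - l2 q*cos H2 = -l2 p /\ s3*rho*cos (H2 + s3*a) + (s1-s3)*rho*cos H2 - l2 q*sin H2 = s1*rho).
  { apply (frame1 rho s1 s3 psi H2 (H2 + s3*a) (l2 q) (l2 p)).
    - replace (psi + H2) with h2 by (unfold H2; ring).
      replace (psi + (H2 + s3 * a)) with (h2 + s3 * a) by (unfold H2; ring).
      lra.
    - replace (psi + H2) with h2 by (unfold H2; ring).
      replace (psi + (H2 + s3 * a)) with (h2 + s3 * a) by (unfold H2; ring).
      lra. }
  assert (F2 : -s3*rho*sin (-(H2 + s3*a)) - (s5-s3)*rho*sin (-H4) - l4 q*cos (-H4) = -l4 p /\ s3*rho*cos (-(H2 + s3*a)) + (s5-s3)*rho*cos (-H4) - l4 q*sin (-H4) = s5*rho).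
  { apply (frame2 rho s3 s5 psi (H2 + s3*a) H4 (l4 q) (l4 p)).
    - replace (psi + H4) with (h2 + s3 * a + s3 * b) by (unfold H4, H2; ring).
      replace (psi + (H2 + s3 * a)) with (h2 + s3 * a) by (unfold H2; ring).
      lra.
    - replace (psi + H4) with (h2 + s3 * a + s3 * b) by (unfold H4, H2; ring).
      replace (psi + (H2 + s3 * a)) with (h2 + s3 * a) by (unfold H2; ring).
      lra. }
  destruct F1 as [F1x F1y]. destruct F2 as [F2x F2y].
  replace (-(H2 + s3*a)) with (-H4 + s3*b) in F2x, F2y by (unfold H4; ring).
  destruct (combine rho (l2 p) (l4 p) (l2 q) (l4 q) a b H2 H4 s1 s3 s5) as (A0 & B0 & El2 & El4 & [j1 J1] & [j2 J2]);
    try assumption; try lra.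
  { unfold H4; ring. }
  assert (Et1 : th1 q = th1 p).
  { apply (eq_mod (th1 q) (th1 p) s1 j1); try assumption.
    rewrite <- J1. unfold H2, h2, psi. ring. }
  assert (Et5 : th5 q = th5 p).
  { apply (eq_mod (th5 q) (th5 p) s5 (kq - kp - j2)); try assumption.
    rewrite !minus_IZR.
    assert (E4 : H4 = h2 + s3 * a + s3 * b - psi) by (unfold H4, H2; ring).
    lra. }
  unfold path_length. rewrite Et1, Et5, El2, El4, Pa0, Pb0. change (th3a q) with a. change (th3b q) with b. rewrite A0, B0. lra.
Qed.
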